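(* Assume the standing assumptions stated in the context. Let $\mathsf{u}=(\mathsf{u}_1,\mathsf{u}_2)$ be a bounded upper semicontinuous viscosity subsolution of the system $$\rho v_j(x)=H(x,y_j,Dv_j(x))+\lambda_j\big(v_{\bar\jmath}(x)-v_j(x)\big),\qquad j=1,2,\ \bar\jmath=3-j,$$ on $[\underline{x},+\infty)$. Let $\mathsf{v}=(\mathsf{v}_1,\mathsf{v}_2)$ be a bounded lower semicontinuous viscosity supersolution of the same system on $(\underline{x},+\infty)$. Extend $\mathsf{v}_j$ to $\underline{x}$ by $$\mathsf{v}_j(\underline{x})=\liminf_{z\to\underline{x},\,z>\underline{x}}\mathsf{v}_j(z).$$ Then $\mathsf{u}_j\le\mathsf{v}_j$ on $[\underline{x},+\infty)$ for $j=1,2$.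
   Context: Standing assumptions: $\rho>0$; $-\infty<r<\rho$; $0<y_1<y_2$; $\gamma>1$; $\underline{x}\le0$ with $\rho\underline{x}+y_j>0$ for $j=1,2$; $\lambda_1,\lambda_2\ge0$ are constants (Poisson switching intensities). The utility is $u(c)=\frac{c^{1-\gamma}}{1-\gamma}$ for $c>0$. The Hamiltonian is $$H(x,y_j,p)=\sup_{c\ge0}\{u(c)+(rx+y_j-c)p\}=\begin{cases}(rx+y_j)p+\frac{\gamma}{1-\gamma}p^{1-\frac1\gamma}, & p\ge0,\\ +\infty,& p<0.\end{cases}$$ All functions are defined on $[\underline{x},+\infty)$. Viscosity subsolution on a set $S\subseteq[\underline{x},\infty)$: an u.s.c. pair $v=(v_1,v_2)$ such that whenever $\varphi$ is smooth, $j\in\{1,2\}$, and $v_j-\varphi$ has a local maximum (relative to $[\underline{x},\infty)$) at $x_0\in S$, then $\rho v_j(x_0)\le H(x_0,y_j,D\varphi(x_0))+\lambda_j(v_{\bar\jmath}(x_0)-v_j(x_0))$. Viscosity supersolution on $S$: an l.s.c. pair such that whenever $v_j-\varphi$ has a local minimum at $x_0\in S$, then $\rho v_j(x_0)\ge H(x_0,y_j,D\varphi(x_0))+\lambda_j(v_{\bar\jmath}(x_0)-v_j(x_0))$. *)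

(* Defs.v *)
From Stdlib Require Import Reals.
From Coquelicot Require Import Coquelicot.
Open Scope R_scope.

(* p^a for p >= 0, with the convention 0^a = 0 (used only for a > 0). *)
Definition ppow (p a : R) : R := if Req_EM_T p 0 then 0 else Rpower p a.

Definition Ham (r gamma x y p : R) : Rbar :=
  if Rlt_dec p 0 then p_infty
  else Finite ((r * x + y) * p + gamma / (1 - gamma) * ppow p (1 - 1 / gamma)).

Definition smooth (phi : R -> R) : Prop := forall (n : nat) (x : R), ex_derive_n phi n x.

Definition usc_on (D : R -> Prop) (f : R -> R) : Prop :=
  forall x0, D x0 -> forall eps, 0 < eps -> exists delta, 0 < delta /\
    forall x, D x -> Rabs (x - x0) < delta -> f x < f x0 + eps.
Definition lsc_on (D : R -> Prop) (f : R -> R) : Prop :=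
  forall x0, D x0 -> forall eps, 0 < eps -> exists delta, 0 < delta /\
    forall x, D x -> Rabs (x - x0) < delta -> f x0 - eps < f x.

Definition loc_max_on (D : R -> Prop) (f : R -> R) (x0 : R) : Prop :=
  exists delta, 0 < delta /\ forall x, D x -> Rabs (x - x0) < delta -> f x <= f x0.
Definition loc_min_on (D : R -> Prop) (f : R -> R) (x0 : R) : Prop :=
  exists delta, 0 < delta /\ forall x, D x -> Rabs (x - x0) < delta -> f x0 <= f x.

Definition bounded_on (D : R -> Prop) (f : R -> R) : Prop :=
  exists M, forall x, D x -> Rabs (f x) <= M.

Definition sub_ineq (D S : R -> Prop) (rho r gamma yj lamj : R) (vj vjb : R -> R) : Prop :=
  forall (phi : R -> R) (x0 : R), smooth phi -> S x0 ->
    loc_max_on D (fun x => vj x - phi x) x0 ->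
    Rbar_le (Finite (rho * vj x0))
      (Rbar_plus (Ham r gamma x0 yj (Derive phi x0)) (Finite (lamj * (vjb x0 - vj x0)))).
Definition super_ineq (D S : R -> Prop) (rho r gamma yj lamj : R) (vj vjb : R -> R) : Prop :=
  forall (phi : R -> R) (x0 : R), smooth phi -> S x0 ->
    loc_min_on D (fun x => vj x - phi x) x0 ->
    Rbar_le (Rbar_plus (Ham r gamma x0 yj (Derive phi x0)) (Finite (lamj * (vjb x0 - vj x0))))
      (Finite (rho * vj x0)).

Definition visc_sub (D S : R -> Prop) (rho r gamma y1 y2 lam1 lam2 : R) (v1 v2 : R -> R) : Prop :=
  usc_on D v1 /\ usc_on D v2 /\
  sub_ineq D S rho r gamma y1 lam1 v1 v2 /\ sub_ineq D S rho r gamma y2 lam2 v2 v1.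
Definition visc_super (D S : R -> Prop) (rho r gamma y1 y2 lam1 lam2 : R) (v1 v2 : R -> R) : Prop :=
  lsc_on D v1 /\ lsc_on D v2 /\
  super_ineq D S rho r gamma y1 lam1 v1 v2 /\ super_ineq D S rho r gamma y2 lam2 v2 v1.

Definition is_liminf_right (f : R -> R) (a l : R) : Prop :=
  (forall eps, 0 < eps -> exists delta, 0 < delta /\
     forall z, a < z < a + delta -> l - eps < f z) /\
  (forall eps delta, 0 < eps -> 0 < delta -> exists z, a < z < a + delta /\ f z < l + eps).

(* Main.v *)
Require Import Defs.
From Stdlib Require Import Reals.
From Coquelicot Require Import Coquelicot.
From Stdlib Require Import Reals Lra Psatz Classical ClassicalEpsilon FunctionalExtensionality.
From Coquelicot Require Import Coquelicot.
Open Scope R_scope.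

Lemma choice_fun (P : R -> R -> Prop) : (forall x, exists y, P x y) -> exists f, forall x, P x (f x).
Proof.
  intros H. exists (fun x => proj1_sig (constructive_indefinite_description _ (H x))).
  intro x. exact (proj2_sig (constructive_indefinite_description _ (H x))).
Qed.


Lemma usc_max (f : R -> R) (a b : R) : a <= b ->
  usc_on (fun x => a <= x <= b) f ->
  (exists M, forall x, a <= x <= b -> f x <= M) ->
  exists c, a <= c <= b /\ forall x, a <= x <= b -> f x <= f c.
Proof.
  intros Hab Husc [M HM].
  apply NNPP; intro Hno.
  assert (Hex : forall c, a <= c <= b -> exists x, a <= x <= b /\ f c < f x).
  { intros c Hc. apply NNPP; intro H. apply Hno. exists c. split; auto.
    intros x Hx. apply Rnot_lt_le. intro H'. apply H. exists x; auto. }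
  set (F := fun z => exists x, a <= x <= b /\ z = f x).
  assert (HbF : bound F). { exists M. intros z [x [Hx ->]]. auto. }
  assert (HeF : exists z, F z). { exists (f a). exists a. split; [lra|auto]. }
  destruct (completeness F HbF HeF) as [S [HS1 HS2]].
  assert (Hlt : forall c, a <= c <= b -> f c < S).
  { intros c Hc. destruct (Hex c Hc) as [x [Hx Hfx]].
    assert (f x <= S) by (apply HS1; exists x; auto). lra. }
  set (E := fun t => a <= t <= b /\ exists eps, 0 < eps /\ forall x, a <= x <= t -> f x <= S - eps).
  assert (HbE : bound E). { exists b. intros t [Ht _]. lra. }
  assert (HeE : exists t, E t).
  { exists a. split. lra. exists (S - f a). split. pose proof (Hlt a). lra.
    intros x Hx. replace x with a by lra. lra. }
  destruct (completeness E HbE HeE) as [c [Hc1 Hc2]].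
  assert (Hac : a <= c). { apply Hc1. destruct HeE as [t Ht]. split. lra. exists (S - f a).
    split. pose proof (Hlt a). lra. intros x Hx. replace x with a by lra. lra. }
  assert (Hcb : c <= b). { apply Hc2. intros t [Ht _]. lra. }
  assert (Hfc := Hlt c (conj Hac Hcb)).
  destruct (Husc c (conj Hac Hcb) ((S - f c)/2)) as [d [Hd Hdd]]. lra.
  assert (Ht : exists t, E t /\ c - d < t).
  { apply NNPP; intro H. assert (c <= c - d). { apply Hc2. intros t Et.
      apply Rnot_lt_le. intro. apply H. exists t; auto. } lra. }
  destruct Ht as [t [[Ht [e [He Hte]]] Htd]].
  assert (Htc : t <= c) by (apply Hc1; split; [auto| exists e; auto]).
  set (t' := Rmin b (c + d/2)).
  assert (Et' : E t').
  { split. unfold t'. split. apply Rmin_glb; lra. apply Rmin_l.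
    exists (Rmin e ((S - f c)/2)). split. apply Rmin_glb_lt; lra.
    intros x Hx. destruct (Rle_or_lt x t) as [Hxt|Hxt].
    - pose proof (Hte x (conj (proj1 Hx) Hxt)). pose proof (Rmin_l e ((S - f c)/2)). lra.
    - assert (Hxt' : x <= c + d/2) by (pose proof (Rmin_r b (c + d/2)); unfold t' in Hx; lra).
      assert (Hxb : x <= b) by (pose proof (Rmin_l b (c + d/2)); unfold t' in Hx; lra).
      assert (Habs : Rabs (x - c) < d) by (apply Rabs_def1; lra).
      pose proof (Hdd x (conj (proj1 Hx) Hxb) Habs). pose proof (Rmin_r e ((S - f c)/2)). lra. }
  assert (Ht'c : t' <= c) by (apply Hc1; auto).
  assert (Hcb' : c = b).
  { destruct (Rle_lt_dec b (c + d/2)) as [H1|H1].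
    - unfold t' in Ht'c. rewrite Rmin_left in Ht'c by lra. lra.
    - unfold t' in Ht'c. rewrite Rmin_right in Ht'c by lra. lra. }
  destruct Et' as [_ [e' [He' Hall]]].
  assert (Ht'b : t' = b). { unfold t'. apply Rmin_left. lra. }
  rewrite Ht'b in Hall.
  assert (S <= S - e'). { apply HS2. intros z [x [Hx ->]]. auto. }
  lra.
Qed.

Definition upLip (P : R -> Prop) (g : R -> R) : Prop :=
  forall x0, P x0 -> exists K d, 0 <= K /\ 0 < d /\
    forall x, P x -> Rabs (x - x0) < d -> g x <= g x0 + K * Rabs (x - x0).

Lemma usc_plus (P : R -> Prop) f g : usc_on P f -> upLip P g -> usc_on P (fun x => f x + g x).
Proof.
  intros Hf Hg x0 Hx0 eps Heps.
  destruct (Hf x0 Hx0 (eps/2)) as [d1 [Hd1 H1]]. lra.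
  destruct (Hg x0 Hx0) as [K [d [HK [Hd H2]]]].
  exists (Rmin d1 (Rmin d (eps / (2 * (K + 1))))). split.
  { apply Rmin_glb_lt. lra. apply Rmin_glb_lt. lra. apply Rdiv_lt_0_compat; lra. }
  intros x Hx Habs.
  pose proof (Rmin_l d1 (Rmin d (eps / (2 * (K + 1))))).
  pose proof (Rmin_r d1 (Rmin d (eps / (2 * (K + 1))))).
  pose proof (Rmin_l d (eps / (2 * (K + 1)))).
  pose proof (Rmin_r d (eps / (2 * (K + 1)))).
  specialize (H1 x Hx ltac:(lra)). specialize (H2 x Hx ltac:(lra)).
  assert (K * Rabs (x - x0) <= K * (eps / (2 * (K + 1)))).
  { apply Rmult_le_compat_l; lra. }
  assert (K * (eps / (2 * (K + 1))) < eps / 2).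
  { apply Rmult_lt_reg_r with (2 * (K+1)). lra. field_simplify; nra. }
  lra.
Qed.

Lemma upLip_quad P (A B C : R) : upLip P (fun x => A * x * x + B * x + C).
Proof.
  intros x0 _. exists (Rabs A * (2 * Rabs x0 + 1) + Rabs B), 1. split.
  { pose proof (Rabs_pos A); pose proof (Rabs_pos B); pose proof (Rabs_pos x0); nra. }
  split. lra. intros x _ Hx.
  assert (E : A * x * x + B * x + C - (A * x0 * x0 + B * x0 + C) = (x - x0) * (A * (x + x0) + B)) by ring.
  assert (H1 : (x - x0) * (A * (x + x0) + B) <= Rabs (x - x0) * Rabs (A * (x + x0) + B)).
  { rewrite <- Rabs_mult. apply Rle_abs. }
  assert (H2 : Rabs (A * (x + x0) + B) <= Rabs A * (2 * Rabs x0 + 1) + Rabs B).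
  { eapply Rle_trans. apply Rabs_triang. rewrite Rabs_mult.
    assert (Rabs (x + x0) <= 2 * Rabs x0 + 1).
    { replace (x + x0) with ((x - x0) + 2 * x0) by ring. eapply Rle_trans. apply Rabs_triang.
      rewrite Rabs_mult. rewrite (Rabs_right 2) by lra. lra. }
    pose proof (Rabs_pos A). nra. }
  pose proof (Rabs_pos (x - x0)). nra.
Qed.

Lemma smooth_quad (A B C : R) : smooth (fun x => A * x * x + B * x + C).
Proof.
  assert (H : forall n, exists A' B' C', Derive_n (fun x => A * x * x + B * x + C) n = (fun x => A' * x * x + B' * x + C')).
  { induction n as [|n IH]. exists A, B, C. reflexivity.
    destruct IH as [A' [B' [C' HE]]]. exists 0, (2 * A'), B'. simpl. rewrite HE.
    apply functional_extensionality. intro x. apply is_derive_unique. auto_derive. auto. ring. }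
  intros n x. destruct n as [|n]. simpl. exact I. simpl.
  destruct (H n) as [A' [B' [C' HE]]]. rewrite HE. auto_derive. auto.
Qed.

Lemma smooth_ext f g : (forall x, f x = g x) -> smooth g -> smooth f.
Proof. intros H Hg. replace f with g. auto. apply functional_extensionality. intro; auto. Qed.

Lemma exp_le_mono x y : x <= y -> exp x <= exp y.
Proof. intros [H|H]. left; apply exp_increasing; auto. subst; lra. Qed.

Lemma ppow_nonneg p a : 0 <= ppow p a.
Proof. unfold ppow. destruct (Req_EM_T p 0). lra. unfold Rpower. left; apply exp_pos. Qed.

Lemma ppow_pos p a : 0 < p -> ppow p a = exp (a * ln p).
Proof. intros H. unfold ppow. destruct (Req_EM_T p 0). lra. reflexivity. Qed.

Lemma ppow_zero a : ppow 0 a = 0.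
Proof. unfold ppow. destruct (Req_EM_T 0 0). auto. lra. Qed.

Lemma ppow_mono p1 p2 a : 0 <= p1 -> p1 <= p2 -> 0 < a -> ppow p1 a <= ppow p2 a.
Proof.
  intros H1 H2 Ha. destruct H1 as [H1|H1].
  - rewrite !ppow_pos by lra. apply exp_le_mono. apply Rmult_le_compat_l. lra. apply ln_le; lra.
  - subst. rewrite ppow_zero. apply ppow_nonneg.
Qed.

Lemma ppow_scale k q a : 0 < k <= 1 -> 0 <= q -> 0 < a <= 1 -> k * ppow q a <= ppow (k * q) a.
Proof.
  intros Hk Hq Ha. destruct Hq as [Hq|Hq].
  - rewrite !ppow_pos by nra. rewrite ln_mult by lra.
    rewrite Rmult_plus_distr_l, exp_plus.
    apply Rmult_le_compat_r. left; apply exp_pos.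
    rewrite <- (exp_ln k) at 1 by lra. apply exp_le_mono.
    assert (ln k <= 0). { rewrite <- ln_1. apply ln_le; lra. }
    nra.
  - subst. rewrite Rmult_0_r, ppow_zero. lra.
Qed.

Lemma ppow_bound q T a : 0 <= q -> 1 <= T -> 0 < a <= 1 -> ppow q a <= q * exp ((a - 1) * ln T) + T.
Proof.
  intros Hq HT Ha. assert (HlnT : 0 <= ln T) by (rewrite <- ln_1; apply ln_le; lra).
  assert (Hq' : 0 <= q * exp ((a - 1) * ln T)) by (pose proof (exp_pos ((a - 1) * ln T)); nra).
  destruct Hq as [Hq|Hq].
  - rewrite ppow_pos by lra. destruct (Rle_or_lt q T) as [HqT|HqT].
    + assert (exp (a * ln q) <= T).
      { rewrite <- (exp_ln T) by lra. apply exp_le_mono.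
        assert (ln q <= ln T) by (apply ln_le; lra).
        destruct (Rle_or_lt 0 (ln q)); nra. }
      lra.
    + assert (exp (a * ln q) <= q * exp ((a - 1) * ln T)).
      { replace (a * ln q) with (ln q + (a - 1) * ln q) by ring. rewrite exp_plus, exp_ln by lra.
        apply Rmult_le_compat_l. lra. apply exp_le_mono.
        assert (ln T <= ln q) by (apply ln_le; lra). nra. }
      lra.
  - subst. rewrite ppow_zero. lra.
Qed.

Lemma choose_T c b g : 0 < c -> 0 < b -> 0 < g ->
  exists T, 1 <= T /\ c * exp ((1 - 1/g - 1) * ln T) <= b.
Proof.
  intros Hc Hb Hg. exists (exp (g * (c / b + 1))). split.
  - assert (0 < c / b) by (apply Rdiv_lt_0_compat; lra).
    pose proof (exp_ineq1 (g * (c / b + 1)) ltac:(nra)). nra.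
  - rewrite ln_exp. replace ((1 - 1 / g - 1) * (g * (c / b + 1))) with (- (c / b + 1)) by (field; lra).
    rewrite exp_Ropp. assert (H1 : 1 + (c / b + 1) < exp (c / b + 1)).
    { apply exp_ineq1. assert (0 < c / b) by (apply Rdiv_lt_0_compat; lra). lra. }
    assert (0 < c / b) by (apply Rdiv_lt_0_compat; lra).
    apply Rmult_le_reg_r with (exp (c / b + 1)). apply exp_pos.
    rewrite Rmult_assoc, Rinv_l by (pose proof (exp_pos (c/b+1)); lra).
    assert (c = b * (c / b)) by (field; lra). nra.
Qed.

Lemma max2 (A B : R -> R) (C : R -> R -> R) a1 b1 a2 b2 :
  a1 <= b1 -> a2 <= b2 ->
  usc_on (fun x => a1 <= x <= b1) A -> (exists MA, forall x, a1 <= x <= b1 -> A x <= MA) ->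
  (forall x, a1 <= x <= b1 -> usc_on (fun y => a2 <= y <= b2) (fun y => B y + C x y)) ->
  (exists MB, forall x y, a1 <= x <= b1 -> a2 <= y <= b2 -> B y + C x y <= MB) ->
  (exists L, 0 <= L /\ forall x x' y, a1 <= x <= b1 -> a1 <= x' <= b1 -> a2 <= y <= b2 ->
      C x' y <= C x y + L * Rabs (x' - x)) ->
  exists xh yh, a1 <= xh <= b1 /\ a2 <= yh <= b2 /\
    forall x y, a1 <= x <= b1 -> a2 <= y <= b2 -> A x + B y + C x y <= A xh + B yh + C xh yh.
Proof.
  intros H1 H2 HA [MA HMA] HBC [MB HMB] [L [HL HLip]].
  assert (Hy : forall x, exists y, a1 <= x <= b1 -> a2 <= y <= b2 /\
      forall y', a2 <= y' <= b2 -> B y' + C x y' <= B y + C x y).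
  { intro x. destruct (classic (a1 <= x <= b1)) as [Hx|Hx].
    - destruct (usc_max (fun y => B y + C x y) a2 b2 H2 (HBC x Hx)) as [y [Hy1 Hy2]].
      { exists MB. intros; apply HMB; auto. }
      exists y. intros _. split; auto.
    - exists a2. intro; contradiction. }
  destruct (choice_fun _ Hy) as [Y HY].
  set (G := fun x => B (Y x) + C x (Y x)).
  assert (HG : usc_on (fun x => a1 <= x <= b1) (fun x => A x + G x)).
  { apply usc_plus; auto. intros x0 Hx0. exists L, 1. split; auto. split; [lra|].
    intros x Hx _. unfold G. destruct (HY x Hx) as [HYx _]. destruct (HY x0 Hx0) as [HYx0 Hm].
    pose proof (HLip x0 x (Y x) Hx0 Hx HYx). pose proof (Hm (Y x) HYx). lra. }
  destruct (usc_max _ a1 b1 H1 HG) as [xh [Hxh Hmax]].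
  { exists (MA + MB). intros x Hx. unfold G. destruct (HY x Hx) as [HYx _].
    pose proof (HMA x Hx). pose proof (HMB x (Y x) Hx HYx). lra. }
  exists xh, (Y xh). destruct (HY xh Hxh) as [HYh _]. split; auto. split; auto.
  intros x y Hx Hy'. destruct (HY x Hx) as [_ Hm]. pose proof (Hm y Hy').
  pose proof (Hmax x Hx). unfold G in *. lra.
Qed.

Lemma usc_restrict (D P : R -> Prop) f : usc_on D f -> (forall x, P x -> D x) -> usc_on P f.
Proof.
  intros H HP x0 Hx0 eps Heps. destruct (H x0 (HP x0 Hx0) eps Heps) as [d [Hd Hdd]].
  exists d. split; auto.
Qed.

Lemma lsc_neg (P : R -> Prop) f : lsc_on P f -> usc_on P (fun x => - f x).
Proof.
  intros H x0 Hx0 eps Heps. destruct (H x0 Hx0 eps Heps) as [d [Hd Hdd]].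
  exists d. split; auto. intros x Hx Ha. specialize (Hdd x Hx Ha). lra.
Qed.

Lemma upLip_ext P g g' : (forall x, g x = g' x) -> upLip P g' -> upLip P g.
Proof.
  intros He H x0 Hx0. destruct (H x0 Hx0) as [K [d [HK [Hd Hdd]]]]. exists K, d.
  split; auto. split; auto. intros x Hx Ha. rewrite !He. auto.
Qed.

Definition Phi (U V : bool -> R -> R) (xl x1 h beta alpha : R) (b : bool) (x y : R) : R :=
  U b x - V b y - alpha / 2 * (y - (1 - h) * x - h * x1) ^ 2 - beta * (x - xl).

Lemma abs_bounds x : - Rabs x <= x <= Rabs x.
Proof. split. pose proof (Rabs_Ropp x). pose proof (Rle_abs (-x)). lra. apply Rle_abs. Qed.

Lemma max_b (U V : bool -> R -> R) (xl x1 h beta alpha M : R) (b : bool) :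
  0 < alpha -> 0 < beta -> 0 < h <= 1/2 -> xl < x1 ->
  (forall x, xl <= x -> Rabs (U b x) <= M /\ Rabs (V b x) <= M) ->
  usc_on (fun x => xl <= x) (U b) -> lsc_on (fun x => xl <= x) (V b) ->
  exists x y, xl <= x /\ xl <= y /\ forall x' y', xl <= x' -> xl <= y' ->
    Phi U V xl x1 h beta alpha b x' y' <= Phi U V xl x1 h beta alpha b x y.
Proof.
  intros Ha Hb Hh Hx1 HM HU HV.
  set (k := 1 - h). set (c := h * x1).
  assert (Hk : 0 < k <= 1) by (unfold k; lra).
  assert (HM0 : 0 <= M). { destruct (HM xl (Rle_refl _)) as [H _]. pose proof (Rabs_pos (U b xl)). lra. }
  set (X := xl + (4 * M + 1) / beta).
  assert (HX : xl <= X). { unfold X. assert (0 < (4 * M + 1) / beta) by (apply Rdiv_lt_0_compat; lra). lra. }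
  set (D0 := 1 + 2 * (4 * M + 1) / alpha).
  assert (HD0 : 1 <= D0 /\ alpha / 2 * D0 ^ 2 >= 4 * M + 1).
  { unfold D0. assert (0 < 2 * (4 * M + 1) / alpha) by (apply Rdiv_lt_0_compat; lra).
    split. lra. assert (alpha / 2 * (2 * (4 * M + 1) / alpha) = 4 * M + 1) by (field; lra).
    assert (D0 ^ 2 >= D0) by (unfold D0; nra). unfold D0 in *. nra. }
  set (Y := k * X + c + D0).
  assert (Hys : xl <= k * xl + c) by (unfold k, c; nra).
  assert (HY : xl <= Y). { unfold Y. nra. }
  set (A := fun x => U b x - beta * (x - xl)).
  set (B := fun y => - V b y).
  set (C := fun x y => - (alpha / 2 * (y - k * x - c) ^ 2)).
  assert (HPhi : forall x y, Phi U V xl x1 h beta alpha b x y = A x + B y + C x y).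
  { intros. unfold Phi, A, B, C, k, c. ring. }
  destruct (max2 A B C xl X xl Y HX HY) as [xh [yh [Hxh [Hyh Hmax]]]].
  - apply usc_plus. eapply usc_restrict. exact HU. intros; lra.
    apply upLip_ext with (g' := fun x => 0 * x * x + (- beta) * x + beta * xl).
    intro; ring. apply upLip_quad.
  - exists M. intros x Hx. unfold A. destruct (HM x ltac:(lra)) as [H _].
    pose proof (abs_bounds (U b x)). nra.
  - intros x Hx. apply usc_plus. apply lsc_neg. intros x0 Hx0 eps Heps.
    destruct (HV x0 ltac:(lra) eps Heps) as [d [Hd Hdd]]. exists d. split; auto.
    intros; apply Hdd; auto; lra.
    apply upLip_ext with (g' := fun y => (- (alpha / 2)) * y * y + (alpha * (k * x + c)) * y + (- (alpha / 2) * (k * x + c) ^ 2)).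
    intro z; unfold C; cbv beta. field. apply upLip_quad.
  - exists M. intros x y Hx Hy. unfold B, C. destruct (HM y ltac:(lra)) as [_ H].
    pose proof (abs_bounds (V b y)). pose proof (pow2_ge_0 (y - k * x - c)). nra.
  - set (W := 2 * (Rabs xl + Rabs Y) + 2 * k * (Rabs xl + Rabs X) + 2 * Rabs c).
    exists (alpha / 2 * k * W). split.
    { unfold W. pose proof (Rabs_pos xl); pose proof (Rabs_pos Y); pose proof (Rabs_pos X); pose proof (Rabs_pos c).
      assert (0 <= 2 * (Rabs xl + Rabs Y) + 2 * k * (Rabs xl + Rabs X) + 2 * Rabs c) by nra.
      assert (0 <= alpha / 2 * k) by nra. nra. }
    intros x x' y Hx Hx' Hy.
    assert (Hd : C x' y - C x y = alpha / 2 * k * ((x' - x) * (2 * y - k * x - k * x' - 2 * c))) by (unfold C; ring).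
    set (s := 2 * y - k * x - k * x' - 2 * c).
    assert (Hs : Rabs s <= W).
    { apply Rabs_le. pose proof (abs_bounds xl); pose proof (abs_bounds Y); pose proof (abs_bounds X);
      pose proof (abs_bounds c). unfold W, s.
      assert (- (Rabs xl + Rabs Y) <= y <= Rabs xl + Rabs Y) by lra.
      assert (- (Rabs xl + Rabs X) <= x <= Rabs xl + Rabs X) by lra.
      assert (- (Rabs xl + Rabs X) <= x' <= Rabs xl + Rabs X) by lra.
      split; nra. }
    assert ((x' - x) * s <= Rabs (x' - x) * W).
    { apply Rle_trans with (Rabs (x' - x) * Rabs s).
      rewrite <- Rabs_mult. apply Rle_abs.
      apply Rmult_le_compat_l. apply Rabs_pos. auto. }
    assert (0 <= alpha / 2 * k) by nra.
    assert (alpha / 2 * k * ((x' - x) * s) <= alpha / 2 * k * (Rabs (x' - x) * W)) by (apply Rmult_le_compat_l; auto).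
    fold s in Hd. lra.
  - exists xh, yh. split. lra. split. lra.
    intros x' y' Hx' Hy'. rewrite !HPhi.
    assert (Href : Phi U V xl x1 h beta alpha b xl (k * xl + c) >= - 2 * M).
    { assert (E : Phi U V xl x1 h beta alpha b xl (k * xl + c) = U b xl - V b (k * xl + c))
        by (unfold Phi, k, c; field).
      rewrite E. destruct (HM xl (Rle_refl _)) as [H1 _]. destruct (HM (k * xl + c) Hys) as [_ H2].
      pose proof (abs_bounds (U b xl)); pose proof (abs_bounds (V b (k * xl + c))). lra. }
    rewrite HPhi in Href.
    assert (Hmx : A xl + B (k * xl + c) + C xl (k * xl + c) <= A xh + B yh + C xh yh).
    { apply Hmax. lra. split. lra. unfold Y. nra. }
    destruct (Rle_or_lt x' X) as [HxX|HxX].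
    + destruct (Rle_or_lt y' Y) as [HyY|HyY].
      * apply Hmax; lra.
      * assert (y' - k * x' - c >= D0) by (unfold Y in HyY; nra).
        assert ((y' - k * x' - c) ^ 2 >= D0 ^ 2) by nra.
        assert (alpha / 2 * (y' - k * x' - c) ^ 2 >= alpha / 2 * D0 ^ 2).
        { apply Rle_ge, Rmult_le_compat_l. lra. lra. }
        assert (alpha / 2 * (y' - k * x' - c) ^ 2 >= 4 * M + 1) by lra.
        destruct (HM x' Hx') as [HU1 _]. destruct (HM y' Hy') as [_ HV2].
        pose proof (abs_bounds (U b x')); pose proof (abs_bounds (V b y')).
        unfold A, B, C in *. nra.
    + assert (beta * (x' - xl) > 4 * M + 1).
      { unfold X in HxX. assert (beta * ((4 * M + 1) / beta) = 4 * M + 1) by (field; lra). nra. }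
      destruct (HM x' Hx') as [HU1 _]. destruct (HM y' Hy') as [_ HV2].
      pose proof (abs_bounds (U b x')); pose proof (abs_bounds (V b y')).
      pose proof (pow2_ge_0 (y' - k * x' - c)).
      unfold A, B, C in *. nra.
Qed.

Lemma max_all (U V : bool -> R -> R) (xl x1 h beta alpha M : R) :
  0 < alpha -> 0 < beta -> 0 < h <= 1/2 -> xl < x1 ->
  (forall b x, xl <= x -> Rabs (U b x) <= M /\ Rabs (V b x) <= M) ->
  (forall b, usc_on (fun x => xl <= x) (U b)) -> (forall b, lsc_on (fun x => xl <= x) (V b)) ->
  exists b x y, xl <= x /\ xl <= y /\ forall b' x' y', xl <= x' -> xl <= y' ->
    Phi U V xl x1 h beta alpha b' x' y' <= Phi U V xl x1 h beta alpha b x y.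
Proof.
  intros Ha Hb Hh Hx1 HM HU HV.
  destruct (max_b U V xl x1 h beta alpha M true Ha Hb Hh Hx1 (HM true) (HU true) (HV true)) as [xt [yt [Hxt [Hyt Ht]]]].
  destruct (max_b U V xl x1 h beta alpha M false Ha Hb Hh Hx1 (HM false) (HU false) (HV false)) as [xf [yf [Hxf [Hyf Hf]]]].
  destruct (Rle_or_lt (Phi U V xl x1 h beta alpha true xt yt) (Phi U V xl x1 h beta alpha false xf yf)).
  - exists false, xf, yf. split; auto. split; auto. intros [|] x' y' Hx' Hy'.
    + pose proof (Ht x' y' Hx' Hy'). lra.
    + auto.
  - exists true, xt, yt. split; auto. split; auto. intros [|] x' y' Hx' Hy'.
    + auto.
    + pose proof (Hf x' y' Hx' Hy'). lra.
Qed.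

Lemma Ham_neg r g x y p : p < 0 -> Ham r g x y p = p_infty.
Proof. intros H. unfold Ham. destruct (Rlt_dec p 0). auto. lra. Qed.

Lemma Ham_nonneg r g x y p : 0 <= p ->
  Ham r g x y p = Finite ((r * x + y) * p + g / (1 - g) * ppow p (1 - 1 / g)).
Proof. intros H. unfold Ham. destruct (Rlt_dec p 0). lra. auto. Qed.

Lemma super_Dpos xl rho r g yj lamj vj vjb phi x0 :
  super_ineq (fun x => xl < x) (fun x => xl < x) rho r g yj lamj vj vjb ->
  smooth phi -> xl < x0 -> loc_min_on (fun x => xl < x) (fun x => vj x - phi x) x0 ->
  0 <= Derive phi x0.
Proof.
  intros Hs Hp Hx Hm. destruct (Rle_or_lt 0 (Derive phi x0)) as [H|H]; auto.
  exfalso. specialize (Hs phi x0 Hp Hx Hm). rewrite Ham_neg in Hs by auto. simpl in Hs. auto.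
Qed.

Lemma V_mono (V Vb : R -> R) (xl rho r g yj lamj M : R) :
  (forall x, xl <= x -> Rabs (V x) <= M) ->
  lsc_on (fun x => xl <= x) V ->
  super_ineq (fun x => xl < x) (fun x => xl < x) rho r g yj lamj V Vb ->
  forall a c, xl <= a -> a <= c -> V a <= V c.
Proof.
  intros HM Hl Hs a c Ha Hac. apply Rnot_lt_le. intro Hlt.
  assert (Hac' : a < c). { destruct Hac as [Hac|Hac]; auto. subst. lra. }
  set (dv := V a - V c).
  set (m := dv / (2 * (c - a))). set (K := dv / (4 * ((c - a) * (c - a)))).
  assert (Hm : 0 < m) by (unfold m, dv; apply Rdiv_lt_0_compat; lra).
  assert (HK : 0 < K) by (unfold K, dv; apply Rdiv_lt_0_compat; nra).
  assert (HM0 : 0 <= M) by (pose proof (HM a Ha); pose proof (Rabs_pos (V a)); lra).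
  set (R0 := a + 1 + (2 * M + 1) / K + (c - a)).
  set (psi := fun x => m * (x - a) + K * ((x - a) * (x - a))).
  assert (Hpc : psi c = 3 * dv / 4).
  { unfold psi, m, K. field. lra. }
  assert (HpR : psi R0 >= 2 * M + 1).
  { unfold psi. assert (0 < (2 * M + 1) / K) by (apply Rdiv_lt_0_compat; lra).
    assert (K * ((2 * M + 1) / K) = 2 * M + 1) by (field; lra).
    assert (R0 - a >= 1) by (unfold R0; lra).
    assert (R0 - a >= (2 * M + 1) / K) by (unfold R0; lra).
    set (t := R0 - a) in *.
    assert (0 <= K * t * (t - 1)) by (apply Rmult_le_pos; [apply Rmult_le_pos|]; lra).
    assert (K * (t * t) >= K * t) by (ring_simplify; ring_simplify in H3; lra).
    assert (K * t >= K * ((2 * M + 1) / K)) by (apply Rle_ge, Rmult_le_compat_l; lra).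
    assert (0 <= m * t) by (apply Rmult_le_pos; lra).
    lra. }
  assert (HaR : a <= R0) by (unfold R0; assert (0 < (2 * M + 1) / K) by (apply Rdiv_lt_0_compat; lra); lra).
  destruct (usc_max (fun x => - V x + - psi x) a R0 HaR) as [z [Hz Hzmax]].
  { apply usc_plus. apply lsc_neg. intros x0 Hx0 eps Heps.
    destruct (Hl x0 ltac:(lra) eps Heps) as [d [Hd Hdd]]. exists d. split; auto.
    intros; apply Hdd; auto; lra.
    apply upLip_ext with (g' := fun x => (- K) * x * x + (2 * K * a - m) * x + (m * a - K * a * a)).
    intro; unfold psi; ring. apply upLip_quad. }
  { exists M. intros x Hx. pose proof (HM x ltac:(lra)). pose proof (abs_bounds (V x)).
    unfold psi; cbv beta. assert (0 <= m * (x - a)) by (apply Rmult_le_pos; lra).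
    assert (0 <= K * ((x - a) * (x - a))) by (apply Rmult_le_pos; [lra| apply Rmult_le_pos; lra]). lra. }
  assert (Hfa : psi a = 0) by (unfold psi; ring).
  assert (HKp : 0 < (2 * M + 1) / K) by (apply Rdiv_lt_0_compat; lra).
  assert (Hzc := Hzmax c ltac:(unfold R0 in *; lra)).
  assert (HzR := Hzmax R0 ltac:(lra)).
  pose proof (HM R0 ltac:(lra)). pose proof (abs_bounds (V R0)).
  pose proof (HM a Ha). pose proof (abs_bounds (V a)).
  assert (Hza : a < z).
  { destruct (Rle_or_lt z a) as [Hq|Hq]; auto. replace z with a in Hzc by lra. unfold dv in Hpc. lra. }
  assert (HzR' : z < R0).
  { destruct (Rle_or_lt R0 z) as [Hq|Hq]; auto. replace z with R0 in Hzc by lra. unfold dv in Hpc. lra. }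
  set (phi := fun x => - psi x).
  assert (Hsm : smooth phi).
  { apply smooth_ext with (g := fun x => (- K) * x * x + (2 * K * a - m) * x + (m * a - K * a * a)).
    intro; unfold phi, psi; ring. apply smooth_quad. }
  assert (HD : Derive phi z = - (m + 2 * K * (z - a))).
  { apply is_derive_unique. unfold phi, psi. auto_derive. auto. ring. }
  assert (Hmin : loc_min_on (fun x => xl < x) (fun x => V x - phi x) z).
  { exists (Rmin (z - a) (R0 - z)). split. apply Rmin_glb_lt; lra.
    intros x Hx Habs. pose proof (Rmin_l (z - a) (R0 - z)). pose proof (Rmin_r (z - a) (R0 - z)).
    apply Rabs_def2 in Habs. specialize (Hzmax x ltac:(lra)). unfold phi. lra. }
  assert (Hxz : xl < z) by lra.
  pose proof (super_Dpos _ _ _ _ _ _ _ _ _ _ Hs Hsm Hxz Hmin) as Hpos. rewrite HD in Hpos.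
  assert (0 <= K * (z - a)) by (apply Rmult_le_pos; lra). lra.
Qed.

Lemma step (U V : bool -> R -> R) (Yb Lm : bool -> R) (rho r g xl x1 y1 h beta alpha T : R)
  (b : bool) (xh yh : R) :
  0 < rho -> r < rho -> 1 < g -> 0 < alpha -> 0 < beta -> 0 < h <= 1/2 -> xl < x1 ->
  (forall b, y1 <= Yb b) -> (forall b, 0 <= Lm b) ->
  (forall b, sub_ineq (fun x => xl <= x) (fun x => xl <= x) rho r g (Yb b) (Lm b) (U b) (U (negb b))) ->
  (forall b, super_ineq (fun x => xl < x) (fun x => xl < x) rho r g (Yb b) (Lm b) (V b) (V (negb b))) ->
  1 <= T -> g / (g - 1) * exp ((1 - 1 / g - 1) * ln T) <= r * x1 + y1 ->
  xl <= xh -> xl <= yh ->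
  (forall b' x' y', xl <= x' -> xl <= y' ->
     Phi U V xl x1 h beta alpha b' x' y' <= Phi U V xl x1 h beta alpha b xh yh) ->
  Rabs (yh - (1 - h) * xh - h * x1) < h * (x1 - xl) ->
  rho * Phi U V xl x1 h beta alpha b xh yh <=
    (r - rho / 2) * alpha * (yh - (1 - h) * xh - h * x1) ^ 2 + h * (g / (g - 1)) * T
    + beta * (r * xl + Yb b).
Proof.
  intros Hrho Hr Hg Ha Hb Hh Hx1 Hy1 HLm Hsub Hsup HT HTb Hxh Hyh Hmax He.
  set (e := yh - (1 - h) * xh - h * x1) in *.
  apply Rabs_def2 in He.
  assert (Hyh' : xl < yh).
  { assert ((1 - h) * xl <= (1 - h) * xh) by (apply Rmult_le_compat_l; lra).
    unfold e in He. nra. }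
  set (phv := fun y => - (alpha / 2 * (y - (1 - h) * xh - h * x1) ^ 2)).
  assert (Hsv : smooth phv).
  { apply smooth_ext with (g := fun y => (- (alpha / 2)) * y * y + (alpha * ((1 - h) * xh + h * x1)) * y
       + (- (alpha / 2) * ((1 - h) * xh + h * x1) ^ 2)).
    intro; unfold phv; field. apply smooth_quad. }
  assert (HDv : Derive phv yh = - alpha * e).
  { apply is_derive_unique. unfold phv. auto_derive. auto. unfold e. field. }
  assert (Hmv : loc_min_on (fun x => xl < x) (fun y => V b y - phv y) yh).
  { exists 1. split. lra. intros y Hy _. specialize (Hmax b xh y Hxh ltac:(lra)).
    unfold Phi in Hmax. unfold phv. lra. }
  set (q := - alpha * e).
  assert (Hq : 0 <= q).
  { unfold q. rewrite <- HDv. eapply super_Dpos. apply (Hsup b). auto. auto. exact Hmv. }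
  pose proof (Hsup b phv yh Hsv Hyh' Hmv) as S1.
  rewrite HDv in S1. fold q in S1. rewrite Ham_nonneg in S1 by auto. simpl in S1.
  set (phu := fun x => alpha / 2 * (yh - (1 - h) * x - h * x1) ^ 2 + beta * (x - xl)).
  assert (Hsu : smooth phu).
  { apply smooth_ext with (g := fun x => (alpha / 2 * (1 - h) ^ 2) * x * x
       + (- alpha * (1 - h) * (yh - h * x1) + beta) * x + (alpha / 2 * (yh - h * x1) ^ 2 - beta * xl)).
    intro; unfold phu; field. apply smooth_quad. }
  set (p := (1 - h) * q + beta).
  assert (HDu : Derive phu xh = p).
  { apply is_derive_unique. unfold phu. auto_derive. auto. unfold p, q, e. field. }
  assert (Hmu : loc_max_on (fun x => xl <= x) (fun x => U b x - phu x) xh).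
  { exists 1. split. lra. intros x Hx _. specialize (Hmax b x yh Hx Hyh).
    unfold Phi in Hmax. unfold phu. lra. }
  assert (Hp : 0 <= p). { unfold p. assert (0 <= (1 - h) * q) by (apply Rmult_le_pos; lra). lra. }
  pose proof (Hsub b phu xh Hsu Hxh Hmu) as S2.
  rewrite HDu in S2. rewrite Ham_nonneg in S2 by auto. simpl in S2.
  pose proof (Hmax (negb b) xh yh Hxh Hyh) as Hc. unfold Phi in Hc.
  assert (Hcoup : Lm b * (U (negb b) xh - U b xh) - Lm b * (V (negb b) yh - V b yh) <= 0).
  { assert (Lm b * ((U (negb b) xh - V (negb b) yh) - (U b xh - V b yh)) <= Lm b * 0).
    { apply Rmult_le_compat_l. apply HLm. lra. }
    replace (Lm b * (U (negb b) xh - U b xh) - Lm b * (V (negb b) yh - V b yh))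
      with (Lm b * ((U (negb b) xh - V (negb b) yh) - (U b xh - V b yh))) by ring. lra. }
  set (cc := g / (g - 1)) in *.
  assert (Hcc : 0 < cc) by (unfold cc; apply Rdiv_lt_0_compat; lra).
  assert (Hgc : g / (1 - g) = - cc) by (unfold cc; field; lra).
  rewrite Hgc in S1, S2.
  set (th := 1 - 1 / g) in *.
  assert (Hth : 0 < th <= 1).
  { unfold th. assert (0 < 1 / g < 1). { split. apply Rdiv_lt_0_compat; lra.
      apply Rmult_lt_reg_r with g. lra. field_simplify; lra. } lra. }
  assert (Hk : 0 < 1 - h <= 1) by lra.
  assert (P1 : ppow ((1 - h) * q) th <= ppow p th).
  { apply ppow_mono. apply Rmult_le_pos; lra. unfold p; lra. lra. }
  assert (P2 : (1 - h) * ppow q th <= ppow ((1 - h) * q) th) by (apply ppow_scale; lra).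
  set (Rx := exp ((th - 1) * ln T)) in *.
  assert (P3 : ppow q th <= q * Rx + T) by (apply ppow_bound; lra).
  set (b0 := r * x1 + y1) in *.
  set (pq := ppow q th) in *. set (pp := ppow p th) in *.
  assert (I1 : (r * xh + Yb b) * p - (r * yh + Yb b) * q
     = r * alpha * e ^ 2 - h * (r * x1 + Yb b) * q + beta * (r * xh + Yb b))
     by (unfold p, q, e; ring).
  assert (I2 : h * b0 * q <= h * (r * x1 + Yb b) * q).
  { apply Rmult_le_compat_r. auto. apply Rmult_le_compat_l. lra. unfold b0. pose proof (Hy1 b). lra. }
  assert (I3 : cc * ((1 - h) * pq) <= cc * pp).
  { apply Rmult_le_compat_l. lra. lra. }
  assert (I4 : h * (cc * pq) <= h * (b0 * q + cc * T)).
  { apply Rmult_le_compat_l. lra.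
    assert (cc * pq <= cc * (q * Rx + T)) by (apply Rmult_le_compat_l; lra).
    assert (cc * Rx * q <= b0 * q) by (apply Rmult_le_compat_r; lra).
    assert (cc * (q * Rx + T) = cc * Rx * q + cc * T) by ring. lra. }
  assert (I5 : beta * r * (xh - xl) <= beta * rho * (xh - xl)).
  { apply Rmult_le_compat_r. lra. apply Rmult_le_compat_l; lra. }
  assert (EPhi : rho * Phi U V xl x1 h beta alpha b xh yh = rho * U b xh - rho * V b yh
     - rho / 2 * alpha * e ^ 2 - beta * rho * (xh - xl)) by (unfold Phi, e; field).
  rewrite EPhi.
  assert (E1 : cc * ((1 - h) * pq) = cc * pq - h * (cc * pq)) by ring.
  assert (E2 : beta * (r * xh + Yb b) = beta * r * (xh - xl) + beta * (r * xl + Yb b)) by ring.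
  assert (E3 : h * (b0 * q + cc * T) = h * b0 * q + h * (g / (g - 1)) * T) by (unfold cc; ring).
  assert (E4 : (r - rho / 2) * alpha * e ^ 2 = r * alpha * e ^ 2 - rho / 2 * alpha * e ^ 2) by ring.
  assert (E5 : (r * xh + Yb b) * p + - cc * pp = (r * xh + Yb b) * p - cc * pp) by ring.
  assert (E6 : (r * yh + Yb b) * q + - cc * pq = (r * yh + Yb b) * q - cc * pq) by ring.
  lra.
Qed.

Lemma choice_gen (A : Type) (P : A -> R -> Prop) : (forall x, exists y, P x y) -> exists f, forall x, P x (f x).
Proof.
  intros H. exists (fun x => proj1_sig (constructive_indefinite_description _ (H x))).
  intro x. exact (proj2_sig (constructive_indefinite_description _ (H x))).
Qed.

Lemma choice_bool (A : Type) (P : A -> bool -> Prop) : (forall x, exists y, P x y) -> exists f, forall x, P x (f x).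
Proof.
  intros H. exists (fun x => proj1_sig (constructive_indefinite_description _ (H x))).
  intro x. exact (proj2_sig (constructive_indefinite_description _ (H x))).
Qed.

Lemma pigeon (a : nat -> R) (L U eps : R) : 0 < eps -> (forall n, L <= a n) -> a 0%nat <= U ->
  exists n, a n - a (S n) <= eps.
Proof.
  intros He HL HU. apply NNPP; intro H.
  assert (Hs : forall n, a (S n) < a n - eps).
  { intro n. apply Rnot_le_lt. intro H'. apply H. exists n. lra. }
  assert (Hind : forall n, a n <= a 0%nat - INR n * eps).
  { induction n. simpl. lra. rewrite S_INR. specialize (Hs n). lra. }
  destruct (INR_archimed eps (U - L) He) as [N HN].
  specialize (Hind N). specialize (HL N). lra.
Qed.

Lemma choice_any (A B : Type) (P : A -> B -> Prop) : (forall x, exists y, P x y) -> exists f, forall x, P x (f x).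
Proof.
  intros H. exists (fun x => proj1_sig (constructive_indefinite_description _ (H x))).
  intro x. exact (proj2_sig (constructive_indefinite_description _ (H x))).
Qed.

Lemma core (U V : bool -> R -> R) (Yb Lm : bool -> R) (rho r g xl x1 y1 h beta T M : R)
  (b : bool) (x0 y0 th : R) :
  0 < rho -> r < rho -> 1 < g -> 0 < beta -> 0 < h <= 1/2 -> xl < x1 ->
  (forall b, y1 <= Yb b) -> (forall b, 0 <= Lm b) ->
  (forall b x, xl <= x -> Rabs (U b x) <= M /\ Rabs (V b x) <= M) ->
  (forall b, usc_on (fun x => xl <= x) (U b)) -> (forall b, lsc_on (fun x => xl <= x) (V b)) ->
  (forall b, sub_ineq (fun x => xl <= x) (fun x => xl <= x) rho r g (Yb b) (Lm b) (U b) (U (negb b))) ->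
  (forall b, super_ineq (fun x => xl < x) (fun x => xl < x) rho r g (Yb b) (Lm b) (V b) (V (negb b))) ->
  1 <= T -> g / (g - 1) * exp ((1 - 1 / g - 1) * ln T) <= r * x1 + y1 ->
  xl <= x0 -> y0 = x0 + h * (x1 - x0) -> xl <= y0 -> 0 < th ->
  U b x0 - V b y0 - beta * (x0 - xl) >= 3 * th / 8 ->
  h * (g / (g - 1)) * T <= rho * th / 16 ->
  (forall b, beta * (r * xl + Yb b) <= rho * th / 16) ->
  False.
Proof.
  intros Hrho Hr Hg Hb Hh Hx1 Hy1 HLm HM HU HV Hsub Hsup HT HTb Hx0 Hy0e Hy0 Hth HL0 Hhb Hbb.
  set (E := rho * th / (16 * (Rabs r + 1))).
  assert (HE : 0 < E) by (unfold E; pose proof (Rabs_pos r); apply Rdiv_lt_0_compat; nra).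
  assert (HrE : Rabs r * E <= rho * th / 16).
  { unfold E. pose proof (Rabs_pos r).
    replace (Rabs r * (rho * th / (16 * (Rabs r + 1)))) with ((rho * th / 16) * (Rabs r / (Rabs r + 1))) by (field; lra).
    assert (Rabs r / (Rabs r + 1) <= 1). { apply Rmult_le_reg_r with (Rabs r + 1). lra. field_simplify; lra. }
    assert (0 <= rho * th / 16) by nra. nra. }
  set (w := h * (x1 - xl)).
  assert (Hw : 0 < w) by (unfold w; nra).
  set (a0 := 2 * E / (w * w) + 1).
  assert (Ha0 : E / (w * w) < a0).
  { unfold a0. assert (0 < E / (w * w)) by (apply Rdiv_lt_0_compat; nra).
    replace (2 * E / (w * w)) with (2 * (E / (w * w))) by (field; lra). lra. }
  assert (Ha0p : 0 < a0) by (assert (0 < E / (w * w)) by (apply Rdiv_lt_0_compat; nra); lra).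
  set (al := fun n : nat => a0 * 2 ^ n).
  assert (Hal : forall n, 0 < al n) by (intro n; unfold al; apply Rmult_lt_0_compat; auto; apply pow_lt; lra).
  assert (Hal1 : forall n, a0 <= al n).
  { intro n. unfold al. assert (1 <= 2 ^ n) by (apply pow_R1_Rle; lra). nra. }
  assert (HalS : forall n, al (S n) = 2 * al n) by (intro n; unfold al; simpl; ring).
  assert (Hex : forall n : nat, exists pt : bool * (R * R), xl <= fst (snd pt) /\ xl <= snd (snd pt) /\
     forall b' x' y', xl <= x' -> xl <= y' ->
       Phi U V xl x1 h beta (al n) b' x' y' <= Phi U V xl x1 h beta (al n) (fst pt) (fst (snd pt)) (snd (snd pt))).
  { intro n. destruct (max_all U V xl x1 h beta (al n) M (Hal n) Hb Hh Hx1 HM HU HV) as [bb [xx [yy H]]].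
    exists (bb, (xx, yy)). simpl. exact H. }
  destruct (choice_any _ _ _ Hex) as [pt Hpt].
  set (a := fun n => Phi U V xl x1 h beta (al n) (fst (pt n)) (fst (snd (pt n))) (snd (snd (pt n)))).
  set (L0 := U b x0 - V b y0 - beta * (x0 - xl)).
  assert (HPhi0 : forall al', Phi U V xl x1 h beta al' b x0 y0 = L0).
  { intro. unfold Phi, L0. rewrite Hy0e. field. }
  assert (HaL : forall n, L0 <= a n).
  { intro n. destruct (Hpt n) as [_ [_ Hm]]. rewrite <- (HPhi0 (al n)). apply Hm; lra. }
  assert (HM0 : forall al' bb x y, 0 < al' -> xl <= x -> xl <= y -> Phi U V xl x1 h beta al' bb x y <= 2 * M).
  { intros al' bb x y Hal' Hx Hy. unfold Phi. destruct (HM bb x Hx) as [H1 _]. destruct (HM bb y Hy) as [_ H2].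
    pose proof (abs_bounds (U bb x)). pose proof (abs_bounds (V bb y)).
    pose proof (pow2_ge_0 (y - (1 - h) * x - h * x1)).
    assert (0 <= al' / 2 * (y - (1 - h) * x - h * x1) ^ 2) by (apply Rmult_le_pos; lra).
    assert (0 <= beta * (x - xl)) by (apply Rmult_le_pos; lra). lra. }
  assert (Ha0M : a 0%nat <= 2 * M).
  { unfold a. destruct (Hpt 0%nat) as [Hx [Hy _]]. apply HM0; auto. }
  destruct (pigeon a L0 (2 * M) (E / 4) ltac:(lra) HaL Ha0M) as [n Hn].
  destruct (Hpt (S n)) as [Hxs [Hys Hms]].
  destruct (Hpt n) as [_ [_ Hmn]].
  set (bs := fst (pt (S n))) in *. set (xs := fst (snd (pt (S n)))) in *. set (ys := snd (snd (pt (S n)))) in *.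
  set (e := ys - (1 - h) * xs - h * x1).
  assert (Hrel : Phi U V xl x1 h beta (al n) bs xs ys = a (S n) + al n / 2 * e ^ 2).
  { unfold a. fold bs xs ys. unfold Phi, e. rewrite HalS. field. }
  assert (Hle : Phi U V xl x1 h beta (al n) bs xs ys <= a n) by (apply Hmn; auto).
  assert (Hee : al (S n) * e ^ 2 <= E).
  { rewrite HalS. lra. }
  assert (He2 : 0 <= e ^ 2) by apply pow2_ge_0.
  assert (Habs : Rabs e < w).
  { apply Rnot_le_lt. intro Hc.
    assert (w * w <= e ^ 2).
    { replace (e ^ 2) with (Rabs e * Rabs e). apply Rmult_le_compat; lra.
      rewrite <- Rabs_mult. simpl. rewrite Rmult_1_r. apply Rabs_right. nra. }
    assert (a0 * (w * w) <= al (S n) * e ^ 2).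
    { apply Rmult_le_compat. lra. nra. apply Hal1. auto. }
    assert (E / (w * w) * (w * w) = E) by (field; nra).
    assert (E / (w * w) * (w * w) < a0 * (w * w)) by (apply Rmult_lt_compat_r; nra).
    lra. }
  pose proof (step U V Yb Lm rho r g xl x1 y1 h beta (al (S n)) T bs xs ys Hrho Hr Hg (Hal (S n)) Hb Hh Hx1
     Hy1 HLm Hsub Hsup HT HTb Hxs Hys Hms Habs) as Hst.
  fold e in Hst. fold (a (S n)) in Hst.
  assert (Hx : (r - rho / 2) * al (S n) * e ^ 2 <= Rabs r * E).
  { assert (0 <= al (S n) * e ^ 2) by (apply Rmult_le_pos; [left; apply Hal | auto]).
    assert ((r - rho / 2) * al (S n) * e ^ 2 = (r - rho / 2) * (al (S n) * e ^ 2)) by ring.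
    assert ((r - rho / 2) * (al (S n) * e ^ 2) <= Rabs r * (al (S n) * e ^ 2)).
    { apply Rmult_le_compat_r. auto. pose proof (Rle_abs r). lra. }
    assert (Rabs r * (al (S n) * e ^ 2) <= Rabs r * E) by (apply Rmult_le_compat_l; [apply Rabs_pos| auto]).
    lra. }
  pose proof (Hbb bs). pose proof (HaL (S n)).
  assert (rho * L0 <= rho * a (S n)) by (apply Rmult_le_compat_l; lra).
  fold L0 in HL0.
  assert (rho * (3 * th / 8) <= rho * L0) by (apply Rmult_le_compat_l; lra).
  assert (Ha : a (S n) = Phi U V xl x1 h beta (al (S n)) bs xs ys) by reflexivity.
  rewrite <- Ha in Hst.
  assert (0 < rho * th) by nra.
  lra.
Qed.

Lemma liminf_bound v xl Mv : is_liminf_right v xl (v xl) -> (forall x, xl < x -> Rabs (v x) <= Mv) ->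
  Rabs (v xl) <= Mv + 1.
Proof.
  intros [H1 H2] HM. destruct (H1 1 ltac:(lra)) as [d [Hd Hdd]].
  specialize (Hdd (xl + d / 2) ltac:(lra)). pose proof (HM (xl + d/2) ltac:(lra)).
  destruct (H2 1 1 ltac:(lra) ltac:(lra)) as [z [Hz Hvz]]. pose proof (HM z ltac:(lra)).
  pose proof (abs_bounds (v (xl + d/2))). pose proof (abs_bounds (v z)).
  apply Rabs_le. lra.
Qed.

Lemma lsc_ext v xl : lsc_on (fun x => xl < x) v -> is_liminf_right v xl (v xl) -> lsc_on (fun x => xl <= x) v.
Proof.
  intros Hl [H1 _] x0 Hx0 eps Heps. destruct Hx0 as [Hx0|Hx0].
  - destruct (Hl x0 Hx0 eps Heps) as [d [Hd Hdd]]. exists (Rmin d (x0 - xl)). split.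
    apply Rmin_glb_lt; lra. intros x Hx Ha. pose proof (Rmin_l d (x0 - xl)). pose proof (Rmin_r d (x0 - xl)).
    apply Hdd. apply Rabs_def2 in Ha. lra. lra.
  - subst. destruct (H1 eps Heps) as [d [Hd Hdd]]. exists d. split; auto. intros x Hx Ha.
    destruct Hx as [Hx|Hx]. apply Hdd. apply Rabs_def2 in Ha. lra. subst. lra.
Qed.

Theorem mainTheorem2 (rho r y1 y2 gamma xl lam1 lam2 : R) (u1 u2 v1 v2 : R -> R) :
  0 < rho -> r < rho -> 0 < y1 -> y1 < y2 -> 1 < gamma ->
  xl <= 0 -> 0 < rho * xl + y1 -> 0 < rho * xl + y2 ->
  0 <= lam1 -> 0 <= lam2 ->
  bounded_on (fun x => xl <= x) u1 -> bounded_on (fun x => xl <= x) u2 ->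
  visc_sub (fun x => xl <= x) (fun x => xl <= x) rho r gamma y1 y2 lam1 lam2 u1 u2 ->
  bounded_on (fun x => xl < x) v1 -> bounded_on (fun x => xl < x) v2 ->
  visc_super (fun x => xl < x) (fun x => xl < x) rho r gamma y1 y2 lam1 lam2 v1 v2 ->
  is_liminf_right v1 xl (v1 xl) -> is_liminf_right v2 xl (v2 xl) ->
  forall x, xl <= x -> u1 x <= v1 x /\ u2 x <= v2 x.
Proof.
  intros Hrho Hr Hy1 Hy12 Hg Hxl Hc1 Hc2 Hl1 Hl2 [Mu1 HMu1] [Mu2 HMu2] [Hu1 [Hu2 [Hs1 Hs2]]]
    [Mv1 HMv1] [Mv2 HMv2] [Hv1 [Hv2 [Hp1 Hp2]]] Hli1 Hli2 x Hx.
  set (U := fun b : bool => if b then u1 else u2).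
  set (V := fun b : bool => if b then v1 else v2).
  set (Yb := fun b : bool => if b then y1 else y2).
  set (Lm := fun b : bool => if b then lam1 else lam2).
  set (M := Rabs Mu1 + Rabs Mu2 + Rabs Mv1 + Rabs Mv2 + 1).
  assert (HM : forall b x, xl <= x -> Rabs (U b x) <= M /\ Rabs (V b x) <= M).
  { pose proof (Rabs_pos Mu1); pose proof (Rabs_pos Mu2); pose proof (Rabs_pos Mv1); pose proof (Rabs_pos Mv2).
    pose proof (Rle_abs Mu1); pose proof (Rle_abs Mu2); pose proof (Rle_abs Mv1); pose proof (Rle_abs Mv2).
    assert (B1 : forall x, xl <= x -> Rabs (v1 x) <= Mv1 + 1).
    { intros z [Hz|Hz]. pose proof (HMv1 z Hz). lra. subst. apply liminf_bound; auto. }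
    assert (B2 : forall x, xl <= x -> Rabs (v2 x) <= Mv2 + 1).
    { intros z [Hz|Hz]. pose proof (HMv2 z Hz). lra. subst. apply liminf_bound; auto. }
    intros [|] z Hz; simpl; unfold M.
    - pose proof (HMu1 z Hz). pose proof (B1 z Hz). split; lra.
    - pose proof (HMu2 z Hz). pose proof (B2 z Hz). split; lra. }
  assert (HU : forall b, usc_on (fun x => xl <= x) (U b)) by (intros [|]; auto).
  assert (HV : forall b, lsc_on (fun x => xl <= x) (V b)) by (intros [|]; apply lsc_ext; auto).
  assert (Hsub : forall b, sub_ineq (fun x => xl <= x) (fun x => xl <= x) rho r gamma (Yb b) (Lm b) (U b) (U (negb b)))
    by (intros [|]; auto).
  assert (Hsup : forall b, super_ineq (fun x => xl < x) (fun x => xl < x) rho r gamma (Yb b) (Lm b) (V b) (V (negb b)))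
    by (intros [|]; auto).
  assert (HYb : forall b, y1 <= Yb b) by (intros [|]; simpl; lra).
  assert (HLm : forall b, 0 <= Lm b) by (intros [|]; simpl; lra).
  assert (Hli : forall b, is_liminf_right (V b) xl (V b xl)) by (intros [|]; auto).
  assert (Hmono : forall b a c, xl <= a -> a <= c -> V b a <= V b c).
  { intros b0 a c Ha Hac. apply (V_mono (V b0) (V (negb b0)) xl rho r gamma (Yb b0) (Lm b0) M); auto.
    intros z Hz. apply (HM b0 z Hz). }
  assert (Hrx : 0 < r * xl + y1) by nra.
  assert (Hall : forall b, U b x <= V b x).
  { intro b. apply Rnot_lt_le. intro Hlt. set (th := U b x - V b x).
    assert (Hth : 0 < th) by (unfold th; lra).
    set (d0 := Rmin 1 ((r * xl + y1) / (2 * (Rabs r + 1)))).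
    assert (Hd0 : 0 < d0 /\ Rabs r * d0 <= (r * xl + y1) / 2).
    { pose proof (Rabs_pos r).
      assert (Hd : 0 < d0) by (apply Rmin_glb_lt; [lra | apply Rdiv_lt_0_compat; lra]).
      split. auto.
      assert (d0 <= (r * xl + y1) / (2 * (Rabs r + 1))) by apply Rmin_r.
      assert ((r * xl + y1) / (2 * (Rabs r + 1)) * (Rabs r + 1) = (r * xl + y1) / 2) by (field; lra).
      assert (Rabs r * d0 <= (Rabs r + 1) * d0) by nra.
      assert ((Rabs r + 1) * d0 <= (Rabs r + 1) * ((r * xl + y1) / (2 * (Rabs r + 1)))) by (apply Rmult_le_compat_l; lra).
      lra. }
    assert (Hx1ex : exists x1, xl < x1 /\ 0 < r * x1 + y1 /\ (xl < x -> x1 <= x)).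
    { destruct Hx as [Hx|Hx].
      - exists (xl + Rmin d0 (x - xl)). pose proof (Rmin_l d0 (x - xl)). pose proof (Rmin_r d0 (x - xl)).
        assert (0 < Rmin d0 (x - xl)) by (apply Rmin_glb_lt; lra).
        split. lra. split. pose proof (Rle_abs r). pose proof (abs_bounds r).
        assert (Rabs r * Rmin d0 (x - xl) <= Rabs r * d0) by (apply Rmult_le_compat_l; [apply Rabs_pos|lra]).
        assert (- (Rabs r * Rmin d0 (x - xl)) <= r * Rmin d0 (x - xl)).
        { assert (0 <= Rmin d0 (x - xl)) by lra. nra. }
        lra. intros; lra.
      - exists (xl + d0). split. lra. split.
        assert (- (Rabs r * d0) <= r * d0) by (pose proof (abs_bounds r); nra). nra.
        intros; lra. }
    destruct Hx1ex as [x1 [Hx1 [Hb0 Hx1x]]].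
    set (cc := gamma / (gamma - 1)).
    assert (Hcc : 0 < cc) by (unfold cc; apply Rdiv_lt_0_compat; lra).
    destruct (choose_T cc (r * x1 + y1) gamma Hcc Hb0 ltac:(lra)) as [T [HT HTb]].
    set (hmax := Rmin (1/2) (rho * th / (16 * (cc * T + 1)))).
    assert (Hhmax : 0 < hmax /\ hmax <= 1/2 /\ hmax * cc * T <= rho * th / 16).
    { assert (0 < rho * th / (16 * (cc * T + 1))) by (apply Rdiv_lt_0_compat; nra).
      split. apply Rmin_glb_lt; lra. split. apply Rmin_l.
      assert (hmax <= rho * th / (16 * (cc * T + 1))) by apply Rmin_r.
      assert (rho * th / (16 * (cc * T + 1)) * (cc * T) <= rho * th / 16).
      { replace (rho * th / (16 * (cc * T + 1)) * (cc * T)) with ((rho * th / 16) * (cc * T / (cc * T + 1))) by (field; nra).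
        assert (cc * T / (cc * T + 1) <= 1). { apply Rmult_le_reg_r with (cc * T + 1). nra. field_simplify; nra. }
        assert (0 <= rho * th / 16) by nra. nra. }
      assert (0 <= cc * T) by nra.
      replace (hmax * cc * T) with (hmax * (cc * T)) by ring. nra. }
    assert (Hhex : exists h, 0 < h <= hmax /\ xl <= x + h * (x1 - x) /\ V b (x + h * (x1 - x)) <= V b x + th / 2).
    { destruct Hx as [Hx|Hx].
      - exists hmax. split. lra. specialize (Hx1x Hx).
        assert (0 <= hmax * (x - x1)) by (apply Rmult_le_pos; lra).
        assert (hmax * (x - x1) <= 1 * (x - x1)) by (apply Rmult_le_compat_r; lra).
        split. nra. assert (V b (x + hmax * (x1 - x)) <= V b x) by (apply Hmono; nra). lra.
      - subst x. destruct (Hli b) as [_ H2].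
        destruct (H2 (th / 2) (hmax * (x1 - xl)) ltac:(lra) ltac:(nra)) as [z [Hz Hvz]].
        exists ((z - xl) / (x1 - xl)).
        replace (xl + (z - xl) / (x1 - xl) * (x1 - xl)) with z by (field; lra).
        split. split. apply Rdiv_lt_0_compat; lra.
        apply Rmult_le_reg_r with (x1 - xl). lra. replace ((z - xl) / (x1 - xl) * (x1 - xl)) with (z - xl) by (field; lra). lra.
        split. lra. lra. }
    destruct Hhex as [h [Hh [Hy0 Hvy0]]].
    set (C := Rabs (r * xl) + Rabs y1 + Rabs y2).
    assert (HC : forall b, r * xl + Yb b <= C).
    { intros [|]; simpl; unfold C; pose proof (Rle_abs (r * xl)); pose proof (Rle_abs y1); pose proof (Rle_abs y2);
      pose proof (Rabs_pos y1); pose proof (Rabs_pos y2); lra. }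
    assert (HC0 : 0 <= C) by (unfold C; pose proof (Rabs_pos (r * xl)); pose proof (Rabs_pos y1); pose proof (Rabs_pos y2); lra).
    assert (0 < th / (8 * (x - xl + 1))) by (apply Rdiv_lt_0_compat; lra).
    assert (0 < rho * th / (16 * (C + 1))) by (apply Rdiv_lt_0_compat; nra).
    pose proof (Rmin_r 1 (Rmin (th / (8 * (x - xl + 1))) (rho * th / (16 * (C + 1))))).
    pose proof (Rmin_l (th / (8 * (x - xl + 1))) (rho * th / (16 * (C + 1)))).
    pose proof (Rmin_r (th / (8 * (x - xl + 1))) (rho * th / (16 * (C + 1)))).
    assert (0 < Rmin 1 (Rmin (th / (8 * (x - xl + 1))) (rho * th / (16 * (C + 1))))).
    { apply Rmin_glb_lt. lra. apply Rmin_glb_lt; lra. }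
    set (beta := Rmin 1 (Rmin (th / (8 * (x - xl + 1))) (rho * th / (16 * (C + 1))))) in *.
    assert (Hbeta : 0 < beta /\ beta * (x - xl) <= th / 8 /\ beta * C <= rho * th / 16).
    { split. auto.
      split.
      - assert (th / (8 * (x - xl + 1)) * (x - xl) <= th / 8).
        { replace (th / (8 * (x - xl + 1)) * (x - xl)) with (th / 8 * ((x - xl) / (x - xl + 1))) by (field; lra).
          assert ((x - xl) / (x - xl + 1) <= 1). { apply Rmult_le_reg_r with (x - xl + 1). lra. field_simplify; lra. }
          nra. }
        assert (beta * (x - xl) <= th / (8 * (x - xl + 1)) * (x - xl)) by (apply Rmult_le_compat_r; lra). lra.
      - assert (rho * th / (16 * (C + 1)) * C <= rho * th / 16).
        { replace (rho * th / (16 * (C + 1)) * C) with (rho * th / 16 * (C / (C + 1))) by (field; lra).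
          assert (C / (C + 1) <= 1). { apply Rmult_le_reg_r with (C + 1). lra. field_simplify; lra. }
          assert (0 <= rho * th / 16) by nra. nra. }
        assert (beta * C <= rho * th / (16 * (C + 1)) * C) by (apply Rmult_le_compat_r; lra). lra. }
    destruct Hbeta as [Hb1 [Hb2 Hb3]].
    apply (core U V Yb Lm rho r gamma xl x1 y1 h beta T M b x (x + h * (x1 - x)) th); auto.
    all: try lra.
    all: try (unfold th in *; lra).
    - assert (h * cc * T <= hmax * cc * T).
      { apply Rmult_le_compat_r. lra. apply Rmult_le_compat_r; lra. }
      fold cc. lra.
    - intro b'. pose proof (HC b'). assert (beta * (r * xl + Yb b') <= beta * C) by (apply Rmult_le_compat_l; lra). lra. }
  split. apply (Hall true). apply (Hall false).
Qed.
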